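(* Let $d=(d_1,\dots,d_n)$ be a degree sequence in nonincreasing order and let $e$ be obtained from $d$ by a unit transformation at indices $r<t$: $e_r=d_r-1$, $e_t=d_t+1$, $e_i=d_i$ for $i\notin\{r,t\}$, where $d_r\ge d_t+2$, $t$ is the first index after $r$ with $d_t\le d_r-2$, and $r$ is the last index before $t$ with $d_r\ge d_t+2$ (a trailing $0$ is appended to $d$ if needed, so $d$ and $e$ both have $n$ terms; then $e$ is again nonincreasing). Define $j_r=d_r+1$ if $d_r\ge r$ and $j_r=d_r$ if $d_r<r$; and $j_t=d_t+2$ if $d_t\ge t-1$ and $j_t=d_t+1$ if $d_t<t-1$. For an integer $k$, let $c_1(k)$ be the number of elements of the multiset $\{r,j_t\}$ that are $\le k$ (counted with multiplicity), and $c_{-1}(k)$ the number of elements of the multiset $\{t,j_r\}$ that are $\le k$ (counted with multiplicity). Then: (a) for every $k\le\min\{m(d),m(e)\}$, $\Delta_k(e)=\Delta_k(d)+c_1(k)-c_{-1}(k)$; (b) if $m(e)>m(d)$, then $\Delta_{m(e)}(e)=\Delta_{m(d)}(d)+2$.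
   Context: Degree sequences (of finite simple graphs, terms may be $0$) are listed in nonincreasing order. $m(d)=\max\{i : d_i\ge i-1\}$. For integers $k\ge 0$, $\Delta_k(d)=k(k-1)+\sum_{i>k}\min\{k,d_i\}-\sum_{i\le k}d_i$. *)

(* Defs.v *)
From mathcomp Require Import all_boot all_order all_algebra.
Set Implicit Arguments. Unset Strict Implicit. Unset Printing Implicit Defensive.
Import GRing.Theory Num.Theory.

(* 1-indexed access: dat d i = d_i for 1 <= i <= size d (0 beyond). *)
Definition dat (d : seq nat) (i : nat) : nat := nth 0 d i.-1.

Definition nonincr (d : seq nat) : bool := sorted geq d.

(* d is the degree sequence of a finite simple graph on vertices 1..n
   (vertex i+1 is represented by the ordinal i). *)
Definition graphic (d : seq nat) : Prop :=
  exists E : rel 'I_(size d),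
    irreflexive E /\ symmetric E /\
    forall i : 'I_(size d), #|[set j | E i j]| = nth 0 d i.

Definition mdeg (d : seq nat) : nat :=
  \max_(1 <= i < (size d).+1 | i.-1 <= dat d i) i.

Definition Delta (d : seq nat) (k : nat) : int :=
  ((k * (k - 1))%:Z + (\sum_(k.+1 <= i < (size d).+1) minn k (dat d i))%:Z
   - (\sum_(1 <= i < k.+1) dat d i)%:Z)%R.

Definition unit_transform (d e : seq nat) (r t : nat) : Prop :=
  [/\ size e = size d, 1 <= r, r < t & t <= size d] /\
  dat d t + 2 <= dat d r /\
  (forall i, r < i < t -> dat d r < dat d i + 2) /\  (* t first after r *)
  (forall i, r < i < t -> dat d i < dat d t + 2) /\  (* r last before t *)
  (forall i, 1 <= i <= size d ->
        dat e i = (if i == r then (dat d r).-1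
                   else if i == t then (dat d t).+1 else dat d i)).

Definition j_r (d : seq nat) (r : nat) : nat :=
  if r <= dat d r then (dat d r).+1 else dat d r.
Definition j_t (d : seq nat) (t : nat) : nat :=
  if t.-1 <= dat d t then (dat d t).+2 else (dat d t).+1.

Definition c1 (d : seq nat) (r t k : nat) : nat := (r <= k) + (j_t d t <= k).
Definition cm1 (d : seq nat) (r t k : nat) : nat := (t <= k) + (j_r d r <= k).

(* Main.v *)
Require Import Defs.
From mathcomp Require Import all_boot all_order all_algebra.
From mathcomp Require Import zify.
Import GRing.Theory Num.Theory.
Local Open Scope ring_scope.

Lemma mdeg_wit d : (0 < mdeg d)%N ->
  [/\ (1 <= mdeg d)%N, (mdeg d <= size d)%N & ((mdeg d).-1 <= dat d (mdeg d))%N].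
Proof.
rewrite /mdeg big_nat_cond.
set M := bigop _ _ _.
have : (M == 0)%N || [&& (1 <= M)%N, (M <= size d)%N & (M.-1 <= dat d M)%N].
  rewrite /M; apply: (big_ind (fun x => (x == 0)%N || [&& (1 <= x)%N, (x <= size d)%N & (x.-1 <= dat d x)%N])).
  - by [].
  - move=> x y Hx Hy.
    have [->|->] : maxn x y = x \/ maxn x y = y.
      by case: (leqP x y)=> h; [right|left]; lia.
    + by []. + by [].
  - move=> i /andP[/andP[H1 H2] H3]; apply/orP; right; apply/and3P; split=> //; lia.
by case/orP=> [/eqP->|/and3P[]].
Qed.

Lemma mdeg_ge d i : (1 <= i)%N -> (i <= size d)%N -> (i.-1 <= dat d i)%N -> (i <= mdeg d)%N.
Proof.
move=> H1 H2 H3; rewrite /mdeg.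
apply: (@leq_bigmax_seq _ _ _ (fun i => i)).
- by rewrite mem_index_iota; lia.
- by [].
Qed.

Lemma nonincr_le d i j : nonincr d -> (1 <= i)%N -> (i <= j)%N -> (j <= size d)%N ->
  (dat d j <= dat d i)%N.
Proof.
move=> Hs H1 H2 H3; rewrite /dat.
have := sorted_leq_nth (leT := geq) _ _ 0 Hs.
move=> /(_ _ _) h.
apply: h.
- by move=> a b c /= h1 h2; apply: leq_trans h2 h1.
- by move=> a /=.
- by rewrite inE; lia.
- by rewrite inE; lia.
- lia.
Qed.

Lemma dat_big d i : (size d < i)%N -> dat d i = 0%N.
Proof. by move=> h; rewrite /dat nth_default //; lia. Qed.
Definition g (k i x : nat) : int := if (i <= k)%N then - (x%:Z) else (minn k x)%:Z.

Lemma sumz (m N : nat) (F : nat -> nat) :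
  (\sum_(m <= i < N) F i)%:Z = \sum_(m <= i < N) (F i)%:Z.
Proof. by rewrite (big_morph Posz PoszD (erefl 0%:Z)). Qed.

Lemma sum_one (m N a : nat) (F : nat -> int) : (m <= a)%N -> (a < N)%N ->
  (forall i, (m <= i)%N -> (i < N)%N -> i != a -> F i = 0) ->
  \sum_(m <= i < N) F i = F a.
Proof.
move=> h1 h2 H.
rewrite (big_cat_nat h1 (ltnW h2)) /= [\sum_(a <= i < N) _]big_ltn //.
rewrite big_nat_cond big1 ?add0r; last first.
  move=> i /andP[/andP[a1 a2] _]; apply: H; lia.
rewrite big_nat_cond big1 ?addr0 //.
move=> i /andP[/andP[a1 a2] _]; apply: H; lia.
Qed.

Lemma sum_two (m N a b : nat) (F : nat -> int) : (m <= a)%N -> (a < b)%N -> (b < N)%N ->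
  (forall i, (m <= i)%N -> (i < N)%N -> i != a -> i != b -> F i = 0) ->
  \sum_(m <= i < N) F i = F a + F b.
Proof.
move=> h1 h2 h3 H.
rewrite (big_cat_nat (n:=b)) /=; [|lia|lia].
rewrite (@sum_one m b a) //; last by move=> i a1 a2 a3; apply: H => //; lia.
rewrite (@sum_one b N b) //; move=> i a1 a2 a3; apply: H => //; lia.
Qed.

Lemma DeltaE d k N : (k < N)%N -> (size d < N)%N ->
  Delta d k = (k * (k - 1))%:Z + \sum_(1 <= i < N) g k i (dat d i).
Proof.
move=> hk hn; rewrite /Delta.
rewrite [\sum_(1 <= i < N) _](big_cat_nat (n:=k.+1)) /=; [|lia|lia].
have -> : \sum_(1 <= i < k.+1) g k i (dat d i) = - (\sum_(1 <= i < k.+1) dat d i)%:Z.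
  rewrite sumz -sumrN; apply: eq_big_nat => i /andP[_ h]; rewrite /g ifT //; lia.
have -> : \sum_(k.+1 <= i < N) g k i (dat d i) =
          (\sum_(k.+1 <= i < (size d).+1) minn k (dat d i))%:Z.
  case: (leqP k.+1 (size d).+1) => hh.
    have E0 : \sum_((size d).+1 <= i < N) g k i (dat d i) = 0.
      rewrite big_nat_cond big1 //.
      move=> i /andP[/andP[a1 a2] _]; rewrite dat_big /g; last lia.
      by case: ifP => _; rewrite ?minn0.
    rewrite (big_cat_nat hh) /=; last lia.
    rewrite E0 addr0 sumz; apply: eq_big_nat => i /andP[h _]; rewrite /g ifF //; lia.
  rewrite big_geq; last lia.
  rewrite big_nat_cond big1 //.
  move=> i /andP[/andP[a1 a2] _]; rewrite dat_big /g; last lia.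
  by case: ifP => _; rewrite ?minn0.
lia.
Qed.

Local Close Scope ring_scope.

Theorem lemma14 (d e : seq nat) (r t : nat) :
  nonincr d -> graphic d -> unit_transform d e r t ->
  (forall k : nat, k <= minn (mdeg d) (mdeg e) ->
     Delta e k = (Delta d k + (c1 d r t k)%:Z - (cm1 d r t k)%:Z)%R) /\
  (mdeg d < mdeg e -> Delta e (mdeg e) = (Delta d (mdeg d) + 2)%R).
Proof.
move=> Hs _ [[He H1r Hrt Htn] [Hdrt [Hfirst [Hlast Hdat]]]].
have datE : forall i, (1 <= i)%N -> dat e i = (if i == r then (dat d r).-1
                   else if i == t then (dat d t).+1 else dat d i).
  move=> i hi; case: (leqP i (size d)) => hn; first by apply: Hdat; rewrite hi hn.
  rewrite (@dat_big e i) ?He // (@dat_big d i) //; have -> : (i == r) = false by apply/eqP; lia.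
  by have -> : (i == t) = false by apply/eqP; lia.
have key : forall k, Delta e k = (Delta d k + (g k r (dat d r).-1 - g k r (dat d r))
                                  + (g k t (dat d t).+1 - g k t (dat d t)))%R.
  move=> k.
  rewrite !(@DeltaE _ k (k + size d).+1) ?He; try lia.
  have -> : (\sum_(1 <= i < (k + size d).+1) g k i (dat e i) =
            \sum_(1 <= i < (k + size d).+1) g k i (dat d i) +
            \sum_(1 <= i < (k + size d).+1) (g k i (dat e i) - g k i (dat d i)))%R.
    by rewrite sumrB addrC subrK.
  rewrite [(\sum_(1 <= i < _) (_ - _))%R](@sum_two 1 _ r t); try lia.
    rewrite !datE ?eqxx //; last lia.
    have -> : (t == r) = false by apply/eqP; lia.
    by rewrite ?eqxx; lia.
  move=> i a1 a2 a3 a4; rewrite datE // (negbTE a3) (negbTE a4); lia.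
split.
  move=> k hk.
  have hkd : (k <= mdeg d)%N by lia.
  have hke : (k <= mdeg e)%N by lia.
  have F1 : (t <= k)%N -> (k.-1 <= dat d t)%N.
    move=> htk; have [w1 w2 w3] := mdeg_wit d ltac:(lia).
    have := @nonincr_le d t (mdeg d) Hs ltac:(lia) ltac:(lia) w2; lia.
  have F2 : (r <= k)%N -> (k.-1 <= (dat d r).-1)%N.
    move=> hrk; have [w1 w2 w3] := mdeg_wit e ltac:(lia).
    rewrite He in w2.
    suff : (dat e (mdeg e) <= (dat d r).-1)%N by lia.
    rewrite datE //; case: eqP => [_|hr]; first by [].
    case: eqP => [_|ht]; first by lia.
    case: (ltnP (mdeg e) t) => hmt.
      have := Hlast (mdeg e) ltac:(lia); lia.
    have := @nonincr_le d t (mdeg e) Hs ltac:(lia) ltac:(lia) w2; lia.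
  rewrite key /g /c1 /cm1 /j_r /j_t.
  case: (leqP r k) => h1; case: (leqP t k) => h2;
  case: (leqP r (dat d r)) => h3; case: (leqP t.-1 (dat d t)) => h4;
  case: (leqP (dat d r).+1 k) => h5; case: (leqP (dat d r) k) => h6;
  case: (leqP (dat d t).+2 k) => h7; case: (leqP (dat d t).+1 k) => h8; lia.
move=> Hlt.
have [w1 w2 w3] := mdeg_wit e ltac:(lia).
rewrite He in w2.
have hq : mdeg e = t.
  apply/eqP; apply/negPn/negP => hq.
  have : (mdeg e <= mdeg d)%N.
    apply: mdeg_ge => //.
    move: w3; rewrite datE //; case: eqP => [->|_]; last by rewrite (negbTE hq).
    lia.
  lia.
rewrite hq in w3 *.
have hdt : (dat d t < t.-1)%N.
  case: (leqP t.-1 (dat d t)) => // h.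
  have := @mdeg_ge d t ltac:(lia) Htn h; lia.
have Et : dat e t = (dat d t).+1.
  rewrite datE; last lia.
  by case: eqP => [h|_]; [lia|rewrite eqxx].
rewrite Et in w3.
have hmd : mdeg d = t.-1.
  have := @mdeg_ge d t.-1 ltac:(lia) ltac:(lia).
  have := @nonincr_le d t.-1 t Hs ltac:(lia) ltac:(lia) Htn.
  lia.
rewrite hmd key.
have -> : Delta d t = (Delta d t.-1 + 2)%R.
  rewrite !(@DeltaE _ _ (t + size d).+1); try lia.
  have -> : (\sum_(1 <= i < (t + size d).+1) g t i (dat d i) =
            \sum_(1 <= i < (t + size d).+1) g t.-1 i (dat d i) +
            \sum_(1 <= i < (t + size d).+1) (g t i (dat d i) - g t.-1 i (dat d i)))%R.
    by rewrite sumrB addrC subrK.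
  rewrite [(\sum_(1 <= i < _) (_ - _))%R](@sum_one 1 _ t); try lia.
    rewrite /g leqnn; have -> : (t <= t.-1)%N = false by lia.
    have [s hs] : exists s, t = s.+2 by exists t.-2; lia.
    rewrite hs /= in hdt w3 *; nia.
  move=> i a1 a2 a3; rewrite /g.
  case: (leqP i t.-1) => h1; first by rewrite ifT; lia.
  rewrite ifF; last lia.
  case: (leqP i (size d)) => hn.
    have := @nonincr_le d t i Hs ltac:(lia) ltac:(lia) hn; lia.
  rewrite dat_big //; lia.
rewrite /g; have -> : (r <= t)%N by lia.
rewrite leqnn; lia.
Qed.
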